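(* Let $m=pq$ with $p,q$ distinct primes, let $(K_n,\alpha)$ be an edge-labeled complete graph over $\mathbb{Z}/m\mathbb{Z}$ on $v_1,\dots,v_n$ (every edge labeled by $\langle p\rangle$ or $\langle q\rangle$), and let $(K_{n+1},\alpha)$ be obtained by adding a vertex $v_{n+1}$ joined to each of $v_1,\dots,v_n$ (the star $S_n$), keeping the labels on the edges of $K_n$ and labeling the new edges $v_jv_{n+1}$ by $\langle p\rangle$ or $\langle q\rangle$. Suppose that $[\mathbb{Z}/m\mathbb{Z}]_{(K_n,\alpha)}$ has a minimum generating set consisting of the trivial spline $(1,\dots,1)$ and $i-1$ other flow-up splines (for some $1<i\le n$), each of whose entries lies in the ideal $\langle p\rangle$. Then: (a) if all edge labels of the added star $S_n$ are contained in $\langle p\rangle$, then $\operatorname{rk}[\mathbb{Z}/m\mathbb{Z}]_{(K_{n+1},\alpha)}=\operatorname{rk}[\mathbb{Z}/m\mathbb{Z}]_{(K_n,\alpha)}+1$; (b) if exactly one edge label of the added star $S_n$ is contained in $\langle q\rangle$ and the others are contained in $\langle p\rangle$, then $\operatorname{rk}[\mathbb{Z}/m\mathbb{Z}]_{(K_{n+1},\alpha)}=\operatorname{rk}[\mathbb{Z}/m\mathbb{Z}]_{(K_n,\alpha)}$.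
   Context: Edges are labeled by nonzero proper ideals of $\mathbb{Z}/m\mathbb{Z}$. A spline on an edge-labeled graph $(G,\alpha)$ over $\mathbb{Z}/m\mathbb{Z}$ is a vector $(f_{v_1},\dots,f_{v_n})\in(\mathbb{Z}/m\mathbb{Z})^n$ with $f_{v_i}-f_{v_j}\in\alpha(v_iv_j)$ for every edge; the splines form a $\mathbb{Z}$-module $[\mathbb{Z}/m\mathbb{Z}]_{(G,\alpha)}$. An $i$-th flow-up class (flow-up spline) is a spline with $f_{v_i}\ne0$ and $f_{v_t}=0$ for $t<i$. A minimum generating set is a generating set of the $\mathbb{Z}$-module of smallest possible size; that size is the rank $\operatorname{rk}$. *)

(* Defs.v *)
From HB Require Import structures.
From mathcomp Require Import all_boot all_order all_algebra.
From Stdlib Require Import ClassicalEpsilon.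
Set Implicit Arguments. Unset Strict Implicit. Unset Printing Implicit Defensive.
Import Order.TTheory GRing.Theory Num.Theory.
Local Open Scope ring_scope.

Definition ideal (m d : nat) : {set 'Z_m} := [set d%:R * y | y : 'Z_m].

(* An edge labeling of the complete graph K_n on the vertices 'I_n:
   lab i j is the ideal labeling the edge v_i v_j (i != j). *)
Definition labeling (n m : nat) := 'I_n -> 'I_n -> {set 'Z_m}.

Definition vec (n m : nat) := {ffun 'I_n -> 'Z_m}.

Definition splines (n m : nat) (lab : labeling n m) : {set vec n m} :=
  [set f : vec n m | [forall i : 'I_n, forall j : 'I_n,
      (i != j) ==> (f i - f j \in lab i j)]].

Definition generates (n m : nat) (S : {set vec n m}) (gs : seq (vec n m)) : Prop :=
  (forall g, g \in gs -> g \in S) /\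
  (forall f, f \in S -> exists c : 'I_(size gs) -> int,
       f = \sum_(k < size gs) (nth 0 gs k) *~ c k).

Definition min_generating (n m : nat) (S : {set vec n m}) (gs : seq (vec n m)) : Prop :=
  generates S gs /\ forall gs', generates S gs' -> (size gs <= size gs')%N.

Lemma generates_exists (n m : nat) (S : {set vec n m}) :
  exists r : nat, (fun r => if excluded_middle_informative
     (exists gs, size gs = r /\ generates S gs) then true else false) r.
Proof.
exists (size (enum S)).
case: excluded_middle_informative => // [[]]; exists (enum S); split => //.
split=> [g|f fS]; first by rewrite mem_enum.
have fe : f \in enum S by rewrite mem_enum.
have ilt : (index f (enum S) < size (enum S))%N by rewrite index_mem.
exists (fun k => ((k : nat) == index f (enum S))%:Z).
rewrite (bigD1 (Ordinal ilt)) //= eqxx nth_index // big1 ?addr0 //.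
by move=> k /negbTE; rewrite -val_eqE /= => ->; rewrite mulr0z.
Qed.

Definition rk (n m : nat) (S : {set vec n m}) : nat := ex_minn (generates_exists S).

Definition ones (n m : nat) : vec n m := [ffun => 1].

(* f is an i-th flow-up class (0-based index i). *)
Definition flow_up (n m : nat) (f : vec n m) (i : 'I_n) : Prop :=
  f i != 0 /\ forall t : 'I_n, (t < i)%N -> f t = 0.

(* Main.v *)
Require Import Defs.
From mathcomp Require Import all_boot all_order all_algebra.
From mathcomp Require Import ring zify.
From Stdlib Require Import ClassicalEpsilon.
Import GRing.Theory Num.Theory.
Local Open Scope ring_scope.

Lemma Zm_int0 (m : nat) (z : int) : (1 < m)%N ->
  ((z%:~R : 'Z_m) == 0) = (m%:Z %| z)%Z.
Proof.
move=> m1; case: z => k.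
  by rewrite -pmulrn -(inj_eq val_inj) /= val_Zp_nat.
rewrite NegzE mulrNz oppr_eq0 -pmulrn -(inj_eq val_inj) /= val_Zp_nat //.
Qed.

Lemma idealP m d x : reflect (exists y, x = d%:R * y) (x \in ideal m d).
Proof.
apply: (iffP imsetP) => [[y _ ->]|[y ->]]; by exists y.
Qed.

Lemma ideal0 m d : 0 \in ideal m d.
Proof. by apply/idealP; exists 0; rewrite mulr0. Qed.
Lemma idealD m d x y : x \in ideal m d -> y \in ideal m d -> x + y \in ideal m d.
Proof. by move=> /idealP[a ->] /idealP[b ->]; apply/idealP; exists (a + b); rewrite mulrDr. Qed.
Lemma idealN m d x : x \in ideal m d -> - x \in ideal m d.
Proof. by move=> /idealP[a ->]; apply/idealP; exists (- a); rewrite mulrN. Qed.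
Lemma idealB m d x y : x \in ideal m d -> y \in ideal m d -> x - y \in ideal m d.
Proof. by move=> hx hy; apply: idealD => //; apply: idealN. Qed.
Lemma idealMz m d x z : x \in ideal m d -> x *~ z \in ideal m d.
Proof. by move=> /idealP[a ->]; apply/idealP; exists (a *~ z); rewrite mulrzAr. Qed.
Lemma ideal_sum m d I (r : seq I) (F : I -> 'Z_m) :
  (forall k, F k \in ideal m d) -> \sum_(k <- r) F k \in ideal m d.
Proof. move=> H; elim/big_ind: _ => //; [exact: ideal0 | exact: idealD]. Qed.

Lemma Zm_natE m (x : 'Z_m) : x = (val x)%:R.
Proof. by rewrite natr_Zp. Qed.

Lemma Zm_nat_eq (m a b : nat) : (1 < m)%N -> ((a%:R : 'Z_m) = b%:R) -> a = b %[mod m].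
Proof. by move=> m1 /(congr1 val) /=; rewrite !val_Zp_nat. Qed.

Lemma Zm_m0 (m : nat) : (1 < m)%N -> (m%:R : 'Z_m) = 0.
Proof. by move=> m1; apply: val_inj; rewrite /= val_Zp_nat // modnn. Qed.

Lemma natz_mulz (m p : nat) (z : int) : (p%:R : 'Z_m) *~ z = (p%:Z * z)%:~R.
Proof. by rewrite intrM mulrzr. Qed.

Lemma pq_gt1 p q : prime p -> prime q -> (1 < p * q)%N.
Proof.
move=> pp pq; have p1 := prime_gt1 pp; have q1 := prime_gt1 pq.
by rewrite (leq_trans p1) // leq_pmulr // ltnW.
Qed.

Lemma p_mulz0 p q m (z : int) : prime p -> prime q -> m = (p * q)%N ->
  ((p%:R : 'Z_m) *~ z == 0) = (q%:Z %| z)%Z.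
Proof.
move=> pp pq ->; rewrite natz_mulz Zm_int0 ?pq_gt1 //.
by rewrite PoszM dvdz_mul2l // eqz_nat -lt0n prime_gt0.
Qed.

Lemma ideal_kill p q m (x : 'Z_m) (z : int) : prime p -> prime q -> m = (p * q)%N ->
  x \in ideal m p -> (q%:Z %| z)%Z -> x *~ z = 0.
Proof.
move=> pp pq em /idealP[y ->] dz.
have h : (p%:R : 'Z_m) *~ z = 0 by apply/eqP; rewrite (p_mulz0 _ _ _ z pp pq em).
by rewrite mulrC -mulrzAr h mulr0.
Qed.

Lemma ideal_unit p q m (x : 'Z_m) (w : int) : prime p -> prime q -> m = (p * q)%N ->
  x \in ideal m p -> (q%:Z %| w - 1)%Z -> x *~ w = x.
Proof.
move=> pp pq em xp dw; apply/eqP; rewrite -subr_eq0 -{2}(mulr1z x) -mulrzBr.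
by rewrite (ideal_kill _ _ _ _ _ pp pq em xp dw).
Qed.

Lemma ideal_notsub p q m : prime p -> prime q -> p != q -> m = (p * q)%N ->
  ~~ (ideal m q \subset ideal m p).
Proof.
move=> pp pq npq em; apply/negP => /subsetP /(_ (q%:R)).
have -> : (q%:R : 'Z_m) \in ideal m q by apply/idealP; exists 1; rewrite mulr1.
have m1 : (1 < m)%N by rewrite em pq_gt1.
move=> /(_ isT) /idealP [y]; rewrite [y]Zm_natE -natrM => /(Zm_nat_eq _ _ _ m1).
move: (val y) => v; rewrite em => /(congr1 (modn^~ p)).
rewrite !(modn_dvdm _ (dvdn_mulr q (dvdnn p))) modnMr => /eqP; rewrite -/(dvdn p q).
by rewrite dvdn_prime2 // (negbTE npq).
Qed.

Lemma idealI p q m (x : 'Z_m) : prime p -> prime q -> p != q -> m = (p * q)%N ->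
  x \in ideal m p -> x \in ideal m q -> x = 0.
Proof.
move=> pp pq npq em /idealP[y ->] /idealP[z].
have m1 : (1 < m)%N by rewrite em pq_gt1.
rewrite [y]Zm_natE [z]Zm_natE -!natrM.
move: (val y) (val z) => a b.
move=> e; have := Zm_nat_eq _ _ _ m1 e.
rewrite em => /(congr1 (modn^~ q)).
rewrite !(modn_dvdm _ (dvdn_mull p (dvdnn q))) modnMr => /eqP; rewrite -/(dvdn q (p * a)).
have cqp : coprime q p by rewrite prime_coprime // dvdn_prime2 // eq_sym.
rewrite Gauss_dvdr // => /dvdnP[k ->].
have -> : (p * (k * q) = k * m)%N by rewrite em mulnCA mulnA.
by rewrite natrM em Zm_m0 ?pq_gt1 // mulr0.
Qed.

Lemma bezout_q p q (d : int) : prime p -> prime q -> p != q -> ~~ (q%:Z %| d)%Z ->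
  exists u : int, (q%:Z %| u * (p%:Z * d) - 1)%Z.
Proof.
move=> pp pq npq nd.
have : coprimez (p%:Z * d) q.
  rewrite coprimezMl; apply/andP; split.
    by rewrite coprimezE /= prime_coprime // dvdn_prime2 //.
  by rewrite coprimezE coprime_sym prime_coprime.
case/coprimezP => [[u v]] /= e; exists u.
have -> : u * (p%:Z * d) - 1 = (- v) * q%:Z by rewrite -e; ring.
by rewrite dvdz_mull // dvdzz.
Qed.

Lemma Zm_killz m (x : 'Z_m) (z : int) : (1 < m)%N -> (m%:Z %| z)%Z -> x *~ z = 0.
Proof.
move=> m1 /dvdzP[k ->].
by rewrite mulrzA -pmulrn -mulr_natr Zm_m0 // mulr0.
Qed.

Lemma splinesP n m (lab : labeling n m) (f : vec n m) :
  reflect (forall i j, i != j -> f i - f j \in lab i j) (f \in splines lab).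
Proof.
rewrite inE; apply: (iffP forallP) => [H i j ij | H i].
  by move/forallP: (H i) => /(_ j) /implyP; apply.
by apply/forallP => j; apply/implyP; apply: H.
Qed.

Lemma small_dvd (q a b : nat) : (a < q)%N -> (b < q)%N -> (q%:Z %| a%:Z - b%:Z)%Z -> a = b.
Proof.
move=> aq bq /dvdzP[t ht].
have : t = 0.
  case: t ht => [k|k] ht; [|rewrite NegzE in ht]; nia.
move=> t0; rewrite t0 mul0r in ht; lia.
Qed.

Lemma vec_killz n m (f : vec n m) (z : int) : (1 < m)%N -> (m%:Z %| z)%Z -> f *~ z = 0.
Proof. by move=> m1 dz; apply/ffunP => v; rewrite ffunMzE ffunE Zm_killz. Qed.

Lemma modq_mulz n m p q (x : vec n m) (c : int) : prime p -> prime q -> m = (p * q)%N ->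
  (x *+ p) *~ c = (x *+ p) *+ `|(c %% q%:Z)%Z|%N.
Proof.
move=> pp pq em.
have q0 : q%:Z != 0 by rewrite eqz_nat -lt0n prime_gt0.
rewrite {1}(divz_eq c q%:Z) mulrzDr.
have -> : (x *+ p) *~ ((c %/ q%:Z)%Z * q%:Z) = 0.
  rewrite pmulrn -mulrzA; apply: vec_killz; first by rewrite em pq_gt1.
  by rewrite em PoszM mulrCA dvdz_mull // mulrC dvdzz.
by rewrite add0r [RHS]pmulrn gez0_abs // modz_ge0.
Qed.

Lemma LB n m p q (S : {set vec n m}) (gs vs : seq (vec n m)) :
  prime p -> prime q -> m = (p * q)%N ->
  0 \in S -> (forall f g, f \in S -> g \in S -> f + g \in S) ->
  (forall f z, f \in S -> f *~ z \in S) ->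
  generates S gs -> (forall v, v \in vs -> v \in S) ->
  (forall d : nat -> int,
     \sum_(k < size vs) (nth 0 vs k *+ p) *~ d k = 0 ->
     forall k, (k < size vs)%N -> (q%:Z %| d k)%Z) ->
  (size vs <= size gs)%N.
Proof.
move=> pp pq em S0 SD SZ [gsS gen] vsS ind.
have q1 := prime_gt1 pq.
pose F := fun h : {ffun 'I_(size vs) -> 'I_q} =>
  \sum_(k < size vs) (nth 0 vs k *+ p) *+ h k.
pose G := fun h : {ffun 'I_(size gs) -> 'I_q} =>
  \sum_(k < size gs) (nth 0 gs k *+ p) *+ h k.
have injF : injective F.
  move=> h1 h2 e; apply/ffunP => k; apply: val_inj.
  pose d := fun k : nat => if (insub k : option 'I_(size vs)) is Some k'
     then (h1 k')%:Z - (h2 k')%:Z else 0.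
  have dE : forall k : 'I_(size vs), d k = (h1 k)%:Z - (h2 k)%:Z by move=> l; rewrite /d valK.
  have : \sum_(k < size vs) (nth 0 vs k *+ p) *~ d k = 0.
    under eq_bigr => l _ do rewrite dE.
    rewrite (eq_bigr (fun k : 'I_(size vs) => (nth 0 vs k *+ p) *+ h1 k - (nth 0 vs k *+ p) *+ h2 k)).
      by rewrite sumrB -/(F h1) e subrr.
    by move=> j _; rewrite mulrzBr -!pmulrn.
  by move/ind => /(_ k (ltn_ord k)); rewrite dE => /small_dvd; apply.
have sub : forall h, exists h', F h = G h'.
  move=> h.
  have wS : \sum_(k < size vs) nth 0 vs k *~ (h k)%:Z \in S.
    apply: (big_ind (fun x => x \in S)) => // j _; apply: SZ; apply: vsS.
    by rewrite mem_nth.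
  have [c ec] := gen _ wS.
  have hc : forall l, (`|(c l %% q%:Z)%Z|%N < q)%N.
    move=> l; rewrite -ltz_nat gez0_abs ?modz_ge0 ?ltz_pmod //.
      by rewrite ltz_nat prime_gt0.
    by rewrite eqz_nat -lt0n prime_gt0.
  exists [ffun l => Ordinal (hc l)].
  have -> : F h = (\sum_(k < size vs) nth 0 vs k *~ (h k)%:Z) *+ p.
    rewrite -sumrMnl; apply: eq_bigr => j _.
    by rewrite -pmulrn mulrnAC.
  rewrite ec -sumrMnl; apply: eq_bigr => l _.
  rewrite ffunE /= -(modq_mulz _ _ _ _ _ _ pp pq em).
  by rewrite !pmulrn -!mulrzA mulrC.
have : (#|[set F h | h : {ffun 'I_(size vs) -> 'I_q}]| <=
        #|[set G h | h : {ffun 'I_(size gs) -> 'I_q}]|)%N.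
  apply: subset_leq_card; apply/subsetP => x /imsetP[h _ ->].
  have [h' ->] := sub h; exact: imset_f.
move=> /leq_trans /(_ (leq_imset_card _ _)).
by rewrite card_imset // !card_ffun !card_ord leq_exp2l.
Qed.

Lemma rk_le n m (S : {set vec n m}) gs : generates S gs -> (rk S <= size gs)%N.
Proof.
move=> g; rewrite /rk; case: ex_minnP => r _ minr; apply: minr.
by case: excluded_middle_informative => // -[]; exists gs.
Qed.

Lemma rk_ge n m (S : {set vec n m}) k :
  (forall gs, generates S gs -> (k <= size gs)%N) -> (k <= rk S)%N.
Proof.
move=> H; rewrite /rk; case: ex_minnP => r Pr _.
move: Pr; case: excluded_middle_informative => // [[gs [egs g]]] _; rewrite -egs; exact: H.
Qed.

Lemma rk_min n m (S : {set vec n m}) gs : min_generating S gs -> rk S = size gs.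
Proof.
move=> [g H]; apply/eqP; rewrite eqn_leq rk_le //=; exact: rk_ge.
Qed.

Lemma drop_gen n m (S : {set vec n m}) (xs : seq (vec n m)) (j : 'I_(size xs))
    (e : 'I_(size xs).-1 -> int) :
  generates S xs ->
  nth 0 xs j = \sum_(k < (size xs).-1) nth 0 xs (lift j k) *~ e k ->
  generates S (mkseq (fun k => nth 0 xs (bump j k)) (size xs).-1).
Proof.
move=> [xsS gen] ej; split.
  move=> g /mapP[k]; rewrite mem_iota add0n => /andP[_ hk] ->; apply: xsS.
  apply: mem_nth; rewrite /bump; case: (j <= k)%N; rewrite ?add1n ?add0n.
    by move: hk; case: (size xs) => //.
  by apply: leq_trans hk (leq_pred _).
move=> f /gen [c ->]; rewrite size_mkseq.
exists (fun k => e k * c j + c (lift j k)).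
rewrite (bigD1_ord j) //= ej mulrz_suml -big_split /=.
by apply: eq_bigr => k _; rewrite nth_mkseq // mulrzDr mulrzA.
Qed.

Lemma Core n m p q (alpha : labeling n m) (gens : seq (vec n m)) (v0 : 'I_n) :
  prime p -> prime q -> p != q -> m = (p * q)%N ->
  min_generating (splines alpha) (ones n m :: gens) ->
  (forall g, g \in gens -> forall v : 'I_n, g v \in ideal m p) ->
  forall d : nat -> int,
    \sum_(k < size (ones n m :: gens)) (nth 0 (ones n m :: gens) k *+ p) *~ d k = 0 ->
    forall k, (k < size (ones n m :: gens))%N -> (q%:Z %| d k)%Z.
Proof.
move=> pp pq npq em [gen mini] gp d R k hk.
have m1 : (1 < m)%N by rewrite em pq_gt1.
apply/negPn/negP => nk.
case: (boolP [exists j : 'I_(size gens), ~~ (q%:Z %| d (lift ord0 j))%Z]).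
  case/existsP => j nj.
  have [u hu] := bezout_q _ _ _ pp pq npq nj.
  set j' : 'I_(size (ones n m :: gens)) := lift ord0 j.
  have R2 : \sum_(k < size (ones n m :: gens))
      nth 0 (ones n m :: gens) k *~ (u * (p%:Z * d k)) = 0.
    rewrite [LHS](_ : _ = (\sum_(k < size (ones n m :: gens))
       (nth 0 (ones n m :: gens) k *+ p) *~ d k) *~ u); first by rewrite R mul0rz.
    rewrite mulrz_suml; apply: eq_bigr => l _.
    by rewrite pmulrn -!mulrzA; congr (_ *~ _); ring.
  rewrite (bigD1_ord j') //= in R2.
  have xj : nth 0 (ones n m :: gens) j' = nth 0 gens j.
    by rewrite /j' /= add0n.
  have jin : nth 0 gens j \in gens by rewrite mem_nth.
  have e1 : nth 0 (ones n m :: gens) j' *~ (u * (p%:Z * d j')) = nth 0 (ones n m :: gens) j'.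
    apply/ffunP => v; rewrite ffunMzE xj.
    by apply: (ideal_unit _ _ _ _ _ pp pq em); [apply: gp | ].
  rewrite e1 in R2.
  have ej : nth 0 (ones n m :: gens) j' = \sum_(k < (size (ones n m :: gens)).-1)
      nth 0 (ones n m :: gens) (lift j' k) *~ (- (u * (p%:Z * d (lift j' k)))).
    move/eqP: R2; rewrite addr_eq0 => /eqP ->; rewrite -sumrN.
    by apply: eq_bigr => l _; rewrite mulrNz.
  have := mini _ (drop_gen _ _ _ _ j' _ gen ej).
  by rewrite size_mkseq /= ltnn.
rewrite negb_exists => /forallP nd.
have R1 : (ones n m *+ p) *~ d 0%N = 0.
  apply: (etrans _ R); rewrite big_ord_recl /= big1 ?addr0 // => j _.
  move: (nd j); rewrite negbK => dj.
  rewrite pmulrn -mulrzA; apply: vec_killz => //.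
  have -> : m%:Z = p%:Z * q%:Z by rewrite em PoszM.
  by rewrite dvdz_mul2l // eqz_nat -lt0n prime_gt0.
have : (q%:Z %| d 0%N)%Z.
  rewrite -(p_mulz0 _ _ _ _ pp pq em); apply/eqP.
  have := congr1 (fun f : vec n m => f v0) R1.
  by rewrite /= ffunMzE ffunMnE !ffunE.
case: k hk nk => [|k] hk; first by move=> /negP.
have hk' : (k < size gens)%N by [].
move: (nd (Ordinal hk')); rewrite negbK.
have -> : (lift ord0 (Ordinal hk') : nat) = k.+1 by rewrite lift0.
by move=> ->.
Qed.

Lemma widen_lift n (j : 'I_n) : widen_ord (leqnSn n) j = lift ord_max j.
Proof. by apply: val_inj; rewrite [RHS]lift_max. Qed.

Lemma ordS_case n (v : 'I_n.+1) :
  (exists j : 'I_n, v = widen_ord (leqnSn n) j) \/ v = ord_max.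
Proof.
case: (unliftP ord_max v) => [j ->|->]; last by right.
by left; exists j; rewrite widen_lift.
Qed.

Lemma widen_max n (j : 'I_n) : widen_ord (leqnSn n) j != ord_max.
Proof. by rewrite -(inj_eq val_inj) /= neq_ltn ltn_ord. Qed.

Lemma widen_eq n (a b : 'I_n) : (widen_ord (leqnSn n) a == widen_ord (leqnSn n) b) = (a == b).
Proof. by rewrite -!(inj_eq val_inj). Qed.

Definition extv n m (c : 'I_n) (f : vec n m) : vec n.+1 m :=
  [ffun v => if unlift ord_max v is Some w then f w else f c].
Arguments extv {n m} c f.

Lemma extv_w n m c (f : vec n m) j : extv c f (widen_ord (leqnSn n) j) = f j.
Proof. by rewrite ffunE widen_lift liftK. Qed.

Lemma extv_max n m c (f : vec n m) : extv c f ord_max = f c.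
Proof. by rewrite ffunE unlift_none. Qed.

Definition res n m (F : vec n.+1 m) : vec n m := [ffun j => F (widen_ord (leqnSn n) j)].
Arguments res {n m} F.

Lemma splines_closed n m (lab : labeling n m) :
  (forall a b, a != b -> exists d, lab a b = ideal m d) ->
  [/\ 0 \in splines lab,
      (forall f g, f \in splines lab -> g \in splines lab -> f + g \in splines lab) &
      (forall f z, f \in splines lab -> f *~ z \in splines lab)].
Proof.
move=> H; split.
- by apply/splinesP => a b ab; have [d ->] := H a b ab; rewrite !ffunE subrr ideal0.
- move=> f g /splinesP hf /splinesP hg; apply/splinesP => a b ab.
  have := hf a b ab; have := hg a b ab; have [d ->] := H a b ab => h1 h2.
  rewrite !ffunE (_ : f a + g a - (f b + g b) = (f a - f b) + (g a - g b)).
    exact: idealD.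
  by rewrite opprD addrACA.
- move=> f z /splinesP hf; apply/splinesP => a b ab.
  have := hf a b ab; have [d ->] := H a b ab => h1.
  by rewrite !ffunMzE -mulrzBl idealMz.
Qed.

Lemma alpha_diff n m p (alpha : labeling n m) (gens : seq (vec n m)) f :
  generates (splines alpha) (ones n m :: gens) ->
  (forall g, g \in gens -> forall v : 'I_n, g v \in ideal m p) ->
  f \in splines alpha -> forall a b, f a - f b \in ideal m p.
Proof.
move=> [_ gen] gp /gen [c ->] a b.
rewrite !sum_ffunE -sumrB; apply: ideal_sum => k.
rewrite !ffunMzE -mulrzBl; apply: idealMz.
case: (unliftP ord0 k) => [j ->|->] /=.
  rewrite add0n; apply: idealB; apply: gp; exact: mem_nth.
by rewrite !ffunE subrr ideal0.
Qed.

Lemma size_vs n m (gens : seq (vec n m)) (i : nat) :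
  (0 < i)%N -> size gens = i.-1 -> size (ones n m :: gens) = i.
Proof. by move=> i0 sz; rewrite /= sz prednK. Qed.

Lemma nthS T (x0 a : T) s n : nth x0 (a :: s) n.+1 = nth x0 s n.
Proof. by []. Qed.

Lemma vec0E n m (v : 'I_n) : (0 : vec n m) v = 0.
Proof. by rewrite /GRing.zero /= ffunE. Qed.


Theorem mainTheorem10 (p q m n i : nat) (alpha : labeling n m)
    (beta : labeling n.+1 m) (gens : seq (vec n m)) :
  prime p -> prime q -> p != q -> m = (p * q)%N ->
  (forall a b : 'I_n, a != b -> alpha a b = ideal m p \/ alpha a b = ideal m q) ->
  (forall a b : 'I_n, alpha a b = alpha b a) ->
  (forall a b : 'I_n,
     beta (widen_ord (leqnSn n) a) (widen_ord (leqnSn n) b) = alpha a b) ->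
  (forall a b : 'I_n.+1, beta a b = beta b a) ->
  (forall j : 'I_n, beta (widen_ord (leqnSn n) j) ord_max = ideal m p \/
                    beta (widen_ord (leqnSn n) j) ord_max = ideal m q) ->
  (1 < i <= n)%N -> size gens = i.-1 ->
  min_generating (splines alpha) (ones n m :: gens) ->
  (forall g, g \in gens ->
     (exists k : 'I_n, flow_up g k) /\ forall v : 'I_n, g v \in ideal m p) ->
  ((forall j : 'I_n, beta (widen_ord (leqnSn n) j) ord_max \subset ideal m p) ->
     rk (splines beta) = (rk (splines alpha)).+1)
  /\
  ((exists j0 : 'I_n,
      beta (widen_ord (leqnSn n) j0) ord_max \subset ideal m q /\
      forall j : 'I_n, j != j0 ->
        beta (widen_ord (leqnSn n) j) ord_max \subset ideal m p) ->
     rk (splines beta) = rk (splines alpha)).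
Proof.
move=> pp pq npq em alab asym bext bsym blab /andP[i1 iN] sz mg gp.
have m1 : (1 < m)%N by rewrite em pq_gt1.
have i0 : (0 < i)%N by apply: ltnW.
have gp' : forall g, g \in gens -> forall v : 'I_n, g v \in ideal m p by move=> g /gp [].
have [gen mini] := mg.
have rka : rk (splines alpha) = i by rewrite (rk_min _ _ _ _ mg) (size_vs _ _ _ _ i0 sz).
have n0 : (0 < n)%N by apply: leq_trans iN; apply: ltnW.
pose v0 : 'I_n := Ordinal n0.
have agood : forall a b : 'I_n, a != b -> exists d, alpha a b = ideal m d.
  by move=> a b ab; case: (alab a b ab) => ->; eexists.
have [Sa0 SaD SaZ] := splines_closed n m alpha agood.
have bgood : forall a b : 'I_n.+1, a != b -> exists d, beta a b = ideal m d.
  move=> a b ab; have [[a' ea]|ea] := ordS_case _ a; have [[b' eb]|eb] := ordS_case _ b;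
    subst a b.
  - by rewrite bext; apply: agood; move: ab; rewrite widen_eq.
  - by case: (blab a') => ->; eexists.
  - by rewrite bsym; case: (blab b') => ->; eexists.
  - by rewrite eqxx in ab.
have [Sb0 SbD SbZ] := splines_closed n.+1 m beta bgood.
have resS : forall F, F \in splines beta -> res F \in splines alpha.
  move=> F /splinesP hF; apply/splinesP => a b ab; rewrite !ffunE -bext.
  by apply: hF; rewrite widen_eq.
have diffa : forall f, f \in splines alpha -> forall a b, f a - f b \in ideal m p.
  by move=> f; apply: (alpha_diff _ _ _ _ _ f gen gp').
have extS : forall c f, f \in splines alpha ->
    (forall j, f j - f c \in beta (widen_ord (leqnSn n) j) ord_max) ->
    extv c f \in splines beta.
  move=> c f /splinesP hf hc; apply/splinesP => a b ab.
  have [[a' ea]|ea] := ordS_case _ a; have [[b' eb]|eb] := ordS_case _ b; subst a b.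
  - by rewrite !extv_w bext; apply: hf; move: ab; rewrite widen_eq.
  - by rewrite extv_w extv_max; apply: hc.
  - rewrite extv_w extv_max bsym -opprB; have := hc b'.
    by case: (blab b') => ->; apply: idealN.
  - by rewrite eqxx in ab.
have core := Core _ _ _ _ _ _ v0 pp pq npq em mg gp'.
have xsS : forall x, x \in ones n m :: gens -> x \in splines alpha by apply: gen.1.
have pin : (p%:R : 'Z_m) \in ideal m p by apply/idealP; exists 1; rewrite mulr1.
have szx : size (ones n m :: gens) = i by apply: size_vs.
split.
  move=> Hsub.
  have labp : forall j, beta (widen_ord (leqnSn n) j) ord_max = ideal m p.
    move=> j; case: (blab j) => // E; have := Hsub j; rewrite E => H.
    by have := ideal_notsub _ _ _ pp pq npq em; rewrite H.
  pose eN : vec n.+1 m := [ffun v => if v == ord_max then p%:R else 0].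
  have eNS : eN \in splines beta.
    apply/splinesP => a b ab.
    have [[a' ea]|ea] := ordS_case _ a; have [[b' eb]|eb] := ordS_case _ b; subst a b.
    - rewrite !ffunE !(negbTE (widen_max _ _)) subrr.
      by have [d ->] := bgood _ _ ab; exact: ideal0.
    - by rewrite !ffunE (negbTE (widen_max _ _)) eqxx sub0r labp; exact: idealN.
    - by rewrite !ffunE (negbTE (widen_max _ _)) eqxx subr0 bsym labp.
    - by rewrite eqxx in ab.
  pose vsA := eN :: map (extv v0) (ones n m :: gens).
  have szA : size vsA = i.+1 by rewrite -szx /vsA /= size_map.
  have vsAS : forall v, v \in vsA -> v \in splines beta.
    move=> v; rewrite inE => /orP[/eqP -> //|/mapP[x xin ->]].
    apply: extS; first exact: xsS.
    by move=> j; rewrite labp; apply: diffa; apply: xsS.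
  have genA : generates (splines beta) vsA.
    split => // F FS.
    have [c ec] := gen.2 _ (resS _ FS).
    have : F (widen_ord (leqnSn n) v0) - F ord_max \in ideal m p.
      by rewrite -(labp v0); move/splinesP: FS; apply; exact: widen_max.
    rewrite -opprB => /idealN; rewrite opprK => /idealP [y ey].
    pose cn := fun k : nat => if (insub k : option 'I_(size (ones n m :: gens))) is Some k'
       then c k' else 0.
    pose g := fun k : nat => if k is k'.+1 then cn k' else (val y)%:Z.
    exists (fun k : 'I_(size vsA) => g k).
    rewrite szA big_ord_recl -szx.
    under eq_bigr => k _ do rewrite lift0 /vsA /g nthS (nth_map 0) // /cn valK.
    have -> : nth 0 vsA ord0 *~ g ord0 = eN *~ (val y)%:Z by [].
    apply/ffunP => v; rewrite ffunE sum_ffunE ffunMzE ffunE.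
    have [[j ->]|->] := ordS_case _ v.
      rewrite (negbTE (widen_max _ _)) mul0rz add0r.
      have := congr1 (fun f : vec n m => f j) ec; rewrite /= ffunE sum_ffunE => ->.
      by apply: eq_bigr => k _; rewrite !ffunMzE extv_w.
    rewrite eqxx.
    have e2 : \sum_(k < (size gens).+1)
        extv v0 (nth 0 (ones n m :: gens) k) ord_max *~ c k = F (widen_ord (leqnSn n) v0).
      have := congr1 (fun f : vec n m => f v0) ec; rewrite /= ffunE sum_ffunE => ->.
      by apply: eq_bigr => k _; rewrite ffunMzE extv_max.
    rewrite -[F ord_max](subrK (F (widen_ord (leqnSn n) v0))) ey -e2.
    congr (_ + _); first by rewrite -mulrzr -pmulrn natr_Zp.
    by apply: eq_bigr => k _; rewrite ffunMzE.
  have indA : forall d : nat -> int,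
      \sum_(k < size vsA) (nth 0 vsA k *+ p) *~ d k = 0 ->
      forall k, (k < size vsA)%N -> (q%:Z %| d k)%Z.
    move=> d R.
    have R' : (eN *+ p) *~ d 0%N + \sum_(k < size (ones n m :: gens))
        (extv v0 (nth 0 (ones n m :: gens) k) *+ p) *~ d k.+1 = 0.
      apply: (etrans _ R); rewrite szA [RHS]big_ord_recl -szx; congr (_ + _).
      by apply: eq_bigr => k _; rewrite lift0 /vsA nthS (nth_map 0).
    have Rv : \sum_(k < size (ones n m :: gens))
        (nth 0 (ones n m :: gens) k *+ p) *~ d k.+1 = 0.
      apply/ffunP => j; have := congr1 (fun f : vec n.+1 m => f (widen_ord (leqnSn n) j)) R'.
      rewrite /= ffunE sum_ffunE !vec0E => H; apply: etrans _ H.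
      rewrite ffunMzE ffunMnE ffunE (negbTE (widen_max _ _)) mul0rn mul0rz add0r sum_ffunE.
      by apply: eq_bigr => k _; rewrite !ffunMzE !ffunMnE extv_w.
    have dq := core (fun k => d k.+1) Rv.
    have d0 : (q%:Z %| d 0%N)%Z.
      have := congr1 (fun f : vec n.+1 m => f ord_max) R'.
      rewrite /= ffunE sum_ffunE ffunMzE ffunMnE ffunE eqxx big1 ?addr0 => [h|k _].
        have cqp : coprimez q p by rewrite coprimezE /= prime_coprime // dvdn_prime2 // eq_sym.
        rewrite -(Gauss_dvdzr _ cqp) -(p_mulz0 _ _ _ _ pp pq em) mulrzA -pmulrn.
        by rewrite h vec0E.
      rewrite ffunMzE ffunMnE extv_max pmulrn -mulrzA; apply: Zm_killz => //.
      have -> : m%:Z = p%:Z * q%:Z by rewrite em PoszM.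
      by rewrite dvdz_mul2l ?dq // eqz_nat -lt0n prime_gt0.
    case=> [|k] hk; first exact: d0.
    by apply: dq; rewrite szx -ltnS -szA.
  rewrite rka; apply/eqP; rewrite eqn_leq; apply/andP; split.
    by rewrite -szA; apply: rk_le.
  apply: rk_ge => gs g; rewrite -szA.
  exact: (LB _ _ _ _ _ _ _ pp pq em Sb0 SbD SbZ g vsAS indA).
move=> [j0 [Hq Hp]].
have labq : beta (widen_ord (leqnSn n) j0) ord_max = ideal m q.
  case: (blab j0) => // E; move: Hq; rewrite E => H.
  have em' : m = (q * p)%N by rewrite mulnC.
  have nqp : q != p by rewrite eq_sym.
  by have := ideal_notsub _ _ _ pq pp nqp em'; rewrite H.
have labp : forall j, j != j0 -> beta (widen_ord (leqnSn n) j) ord_max = ideal m p.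
  move=> j jj; case: (blab j) => // E; have := Hp j jj; rewrite E => H.
  by have := ideal_notsub _ _ _ pp pq npq em; rewrite H.
have n1 : (1 < n)%N by apply: leq_trans iN.
pose v1 : 'I_n := Ordinal n1.
pose j1 := if j0 == v0 then v1 else v0.
have j1j0 : j1 != j0.
  rewrite /j1; case: (eqVneq j0 v0) => [->|ne]; last by rewrite eq_sym.
  by rewrite -(inj_eq val_inj).
pose vsB := map (extv j0) (ones n m :: gens).
have szB : size vsB = i by rewrite size_map.
have vsBS : forall v, v \in vsB -> v \in splines beta.
  move=> v /mapP[x xin ->]; apply: extS; first exact: xsS.
  move=> j; case: (eqVneq j j0) => [->|jj].
    by rewrite subrr labq ideal0.
  by rewrite labp //; apply: diffa; apply: xsS.
have genB : generates (splines beta) vsB.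
  split => // F FS.
  have [c ec] := gen.2 _ (resS _ FS).
  pose cn := fun k : nat => if (insub k : option 'I_(size (ones n m :: gens))) is Some k'
     then c k' else 0.
  exists (fun k : 'I_(size vsB) => cn k).
  rewrite /vsB size_map.
  under eq_bigr => k _ do rewrite (nth_map 0) // /cn valK.
  apply/ffunP => v; rewrite sum_ffunE.
  have [[j ->]|->] := ordS_case _ v.
    have := congr1 (fun f : vec n m => f j) ec; rewrite /= ffunE sum_ffunE => ->.
    by apply: eq_bigr => k _; rewrite !ffunMzE extv_w.
  have e2 : \sum_(k < (size gens).+1)
      (extv j0 (nth 0 (ones n m :: gens) k) *~ c k) ord_max = F (widen_ord (leqnSn n) j0).
    have := congr1 (fun f : vec n m => f j0) ec; rewrite /= ffunE sum_ffunE => ->.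
    by apply: eq_bigr => k _; rewrite !ffunMzE extv_max.
  rewrite e2; apply/eqP; rewrite eq_sym -subr_eq0; apply/eqP.
  apply: (idealI _ _ _ _ pp pq npq em).
    rewrite -(subrK (F (widen_ord (leqnSn n) j1)) (F _)) -addrA.
    apply: idealD.
      have := diffa _ (resS _ FS) j0 j1; by rewrite !ffunE.
    by rewrite -(labp j1 j1j0); move/splinesP: FS; apply; exact: widen_max.
  by rewrite -labq; move/splinesP: FS; apply; exact: widen_max.
have indB : forall d : nat -> int,
    \sum_(k < size vsB) (nth 0 vsB k *+ p) *~ d k = 0 ->
    forall k, (k < size vsB)%N -> (q%:Z %| d k)%Z.
  move=> d R k hk; apply: core; last by rewrite szx -szB.
  apply/ffunP => j; have := congr1 (fun f : vec n.+1 m => f (widen_ord (leqnSn n) j)) R.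
  rewrite /= sum_ffunE !vec0E => H; apply: etrans _ H.
  rewrite sum_ffunE /vsB size_map.
  by apply: eq_bigr => l _; rewrite (nth_map 0) // !ffunMzE !ffunMnE extv_w.
rewrite rka; apply/eqP; rewrite eqn_leq; apply/andP; split.
  by rewrite -szB; apply: rk_le.
apply: rk_ge => gs g; rewrite -szB.
exact: (LB _ _ _ _ _ _ _ pp pq em Sb0 SbD SbZ g vsBS indB).
Qed.
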